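(* Let $X,Y$ be Tychonoff spaces and $f:X\to Y$ a meshing map, and let $f_\beta:\beta X\to\beta Y$ be the continuous extension of $f$. Then for any two distinct points $x_1,x_2\in N(X)$ with $f(x_1)=f(x_2)$ there exist neighbourhoods $U_1$ of $x_1$ and $U_2$ of $x_2$ in $\beta X$ such that $f_\beta(U_1)\cap f_\beta(U_2)$ is a compact subset of $Y$.
   Context: $\beta X$ denotes the Stone–Čech compactification. A space $X$ is Menger if for each sequence $(\mathcal{U}_n)$ of open covers of $X$ there is a sequence $(\mathcal{V}_n)$ with each $\mathcal{V}_n$ a finite subset of $\mathcal{U}_n$ and $\bigcup_{n}\bigcup\mathcal{V}_n=X$. $X$ is locally Menger at $x$ if there are an open set $U$ and a Menger subspace $M$ of $X$ with $x\in U\subseteq M$; $N(X)$ denotes the set of points of $X$ at which $X$ is not locally Menger. A continuous surjection $f:X\to Y$ is a meshing map if there are compactifications $bX$ of $X$ and $cY$ of $Y$ and a continuous extension $\tilde f:bX\to cY$ of $f$ onto $cY$ such that $\tilde f|_{bX\setminus X}$ is a homeomorphism onto $cY\setminus Y$. *)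

(* Defs.v *)
From HB Require Import structures.
From mathcomp Require Import all_boot all_order all_algebra.
From mathcomp Require Import all_classical all_reals all_analysis.
From mathcomp Require Import Rstruct Rstruct_topology.
From Stdlib Require Reals.

Set Implicit Arguments.
Unset Strict Implicit.
Unset Printing Implicit Defensive.

Import Order.TTheory GRing.Theory Num.Theory.
Local Open Scope classical_set_scope.

Definition completely_regular (T : topologicalType) : Prop :=
  forall (A : set T) (x : T), closed A -> ~ A x ->
    exists g : T -> Rdefinitions.R,
      continuous g /\ g x = 0%R /\ (forall y, A y -> g y = 1%R).

Definition tychonoff_space (T : topologicalType) : Prop :=
  accessible_space T /\ completely_regular T.

Definition embedding (X K : topologicalType) (e : X -> K) : Prop :=
  continuous e /\ injective e /\
  (forall U : set X, open U ->
     exists V : set K, open V /\ e @` U = V `&` range e).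

Definition compactification (X K : topologicalType) (e : X -> K) : Prop :=
  compact [set: K] /\ hausdorff_space K /\ embedding e /\ dense (range e).

Definition stone_cech (X K : topologicalType) (e : X -> K) : Prop :=
  compactification e /\
  forall (Z : topologicalType) (g : X -> Z),
    compact [set: Z] -> hausdorff_space Z -> continuous g ->
    exists G : K -> Z, continuous G /\ G \o e = g.

Definition meshing (X Y : topologicalType) (f : X -> Y) : Prop :=
  continuous f /\ f @` setT = setT /\
  exists (bX cY : topologicalType) (eX : X -> bX) (eY : Y -> cY) (F : bX -> cY),
    compactification eX /\ compactification eY /\
    continuous F /\ F @` setT = setT /\ F \o eX = eY \o f /\
    (* F restricted to bX \ X is a homeomorphism onto cY \ Y *)
    let remX := ~` range eX in let remY := ~` range eY in
    F @` remX = remY /\ {in remX &, injective F} /\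
    (forall U : set bX, open U ->
       exists V : set cY, open V /\ F @` (U `&` remX) = V `&` remY).

(* Menger property for a subspace A of X (open covers of the subspace are
   described by families of open sets of X covering A). *)
Definition menger_subspace (X : topologicalType) (A : set X) : Prop :=
  forall U : nat -> set (set X),
    (forall n, U n `<=` open) ->
    (forall n, A `<=` \bigcup_(W in U n) W) ->
    exists V : nat -> set (set X),
      (forall n, finite_set (V n) /\ V n `<=` U n) /\
      A `<=` \bigcup_n \bigcup_(W in V n) W.

Definition locally_menger_at (X : topologicalType) (x : X) : Prop :=
  exists (U M : set X), open U /\ menger_subspace M /\ U x /\ U `<=` M.

Definition not_locally_menger (X : topologicalType) : set X :=
  [set x | ~ locally_menger_at x].
Arguments not_locally_menger : clear implicits.

(* Main.v *)
Require Import Defs.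
From HB Require Import structures.
From mathcomp Require Import all_boot all_order all_algebra.
From mathcomp Require Import all_classical all_reals all_analysis.

Local Open Scope classical_set_scope.

Lemma sep2 (T : topologicalType) (hT : hausdorff_space T) (x y : T) :
  x <> y -> exists A B : set T, open A /\ open B /\ A x /\ B y /\ A `&` B = set0.
Proof.
move=> /eqP xy; move: hT; rewrite open_hausdorff => /(_ x y xy).
case=> -[A B] /=; rewrite !inE => -[xA yB] [oA oB /eqP AB].
exists A, B; split => //; split => //; split => //; split => //; exact/eqP.
Qed.

Lemma closed_nbhs_sub (T : topologicalType) (hT : hausdorff_space T)
  (cT : compact [set: T]) (x : T) (N : set T) :
  nbhs x N -> exists C, nbhs x C /\ closed C /\ C `<=` N.
Proof.
move=> Nx.
have nT : nbhs x setT by exact: filterT.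
have := @compact_regular T x setT hT cT nT.
move=> /(_ N Nx) [M Mx MN].
exists (closure M); split; last split => //.
- exact: filterS (@subset_closure _ M) Mx.
- exact: closed_closure.
Qed.

Lemma ext_eq (T Z : topologicalType) (X : Type) (e : X -> T) (g h : T -> Z) :
  hausdorff_space Z -> dense (range e) -> continuous g -> continuous h ->
  g \o e = h \o e -> g = h.
Proof.
move=> hZ de cg ch ge; apply/funext => t; apply: contrapT => gh.
have [A [B [oA [oB [Ag [Bh AB]]]]]] := @sep2 _ hZ _ _ gh.
have oO : open (g @^-1` A `&` h @^-1` B).
  by apply: openI; [exact: (proj1 (continuousP g) cg) | exact: (proj1 (continuousP h) ch)].
have [z [[Ht1 Ht2] [x _ ex]]] := de _ (ex_intro _ t (conj Ag Bh)) oO.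
have := congr1 (fun k => k x) ge => /= E.
rewrite /= -ex E in Ht1.
have : (A `&` B) (h (e x)) by split => //; rewrite ex.
by rewrite AB.
Qed.

Lemma embed_compact (Y K : topologicalType) (e : Y -> K) (C : set K) :
  embedding e -> compact C -> C `<=` range e -> compact (e @^-1` C).
Proof.
move=> [ce [ie oe]] cC sC F PF FC.
have GC : (e @ F) C by [].
have [k [Ck clk]] := cC _ (fmap_proper_filter e PF) GC.
have [c _ ck] := sC _ Ck.
exists c; split; first by rewrite /= ck.
move=> A N FA Nc.
rewrite nbhsE in Nc; case: Nc => U [oU Uc] UN.
have [V [oV eV]] := oe U oU.
have Vk : V k.
  have : (e @` U) (e c) by exists c.
  by rewrite eV ck => -[].
have GA : (e @ F) (e @` A).
  by apply: (@filterS _ _ _ A) => // a Aa /=; exists a.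
have [_ [[a Aa <-] Vea]] := clk _ _ GA (open_nbhs_nbhs (conj oV Vk)).
have : (V `&` range e) (e a) by split => //; exists a.
rewrite -eV => -[u Uu /ie eua].
by exists a; split => //; apply: UN; rewrite -eua.
Qed.
Theorem theorem5p22 (X Y : topologicalType) (f : X -> Y)
  (bX bY : topologicalType) (eX : X -> bX) (eY : Y -> bY) (fb : bX -> bY) :
  tychonoff_space X -> tychonoff_space Y ->
  meshing f ->
  stone_cech eX -> stone_cech eY ->
  continuous fb -> fb \o eX = eY \o f ->
  forall x1 x2 : X, x1 <> x2 ->
    not_locally_menger X x1 -> not_locally_menger X x2 -> f x1 = f x2 ->
    exists U1 U2 : set bX,
      nbhs (eX x1) U1 /\ nbhs (eX x2) U2 /\
      exists C : set Y, compact C /\ fb @` U1 `&` fb @` U2 = eY @` C.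
Proof.
move=> _ _ [fc [fs [bX' [cY [eX' [eY' [F [cX [cY' [Fc [Fs [FeX]]]]]]]]]]]].
move=> /= [hrem [hinj _]].
move=> [[cptX [hX [embX dX]]] extX] [[cptY [hY [embY dY]]] extY] fbc fbe.
move=> x1 x2 x12 _ _ fx12.
have [cX'c [hX' [embX' _]]] := cX.
have [cY'c [hY' [embY' _]]] := cY'.
have [p [pc pe]] := extX bX' eX' cX'c hX' (proj1 embX').
have [q [qc qe]] := extY cY eY' cY'c hY' (proj1 embY').
have Fpq : F \o p = q \o fb.
  apply: (@ext_eq _ _ _ eX _ _ hY' dX).
  - by move=> x; apply: continuous_comp; [exact: pc | exact: Fc].
  - by move=> x; apply: continuous_comp; [exact: fbc | exact: qc].
  apply/funext => x /=.
  have := congr1 (fun k => k x) pe => /= ->.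
  have := congr1 (fun k => k x) FeX => /= ->.
  have := congr1 (fun k => k x) fbe => /= ->.
  by have := congr1 (fun k => k (f x)) qe => /= ->.
have ex12 : eX' x1 <> eX' x2 by move=> /(proj1 (proj2 embX')).
have [W1 [W2 [oW1 [oW2 [W1x [W2x W12]]]]]] := @sep2 _ hX' _ _ ex12.
have N1 : nbhs (eX x1) (p @^-1` W1).
  apply: (pc (eX x1)); apply: open_nbhs_nbhs; split => //.
  by have := congr1 (fun k => k x1) pe => /= ->.
have N2 : nbhs (eX x2) (p @^-1` W2).
  apply: (pc (eX x2)); apply: open_nbhs_nbhs; split => //.
  by have := congr1 (fun k => k x2) pe => /= ->.
have [U1 [U1n [U1c U1W]]] := @closed_nbhs_sub _ hX cptX _ _ N1.
have [U2 [U2n [U2c U2W]]] := @closed_nbhs_sub _ hX cptX _ _ N2.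
exists U1, U2; split => //; split => //.
have cK : compact (fb @` U1 `&` fb @` U2).
  apply: compact_closedI.
    apply: continuous_compact; first exact: continuous_subspaceT.
    exact: (subclosed_compact U1c cptX).
  apply: (compact_closed hY).
  apply: continuous_compact; first exact: continuous_subspaceT.
  exact: (subclosed_compact U2c cptX).
have KY : fb @` U1 `&` fb @` U2 `<=` range eY.
  move=> z [[u1 U1u1 e1] [u2 U2u2 e2]].
  have qz1 : q z = F (p u1).
    by have := congr1 (fun k => k u1) Fpq => /= ->; rewrite e1.
  have qz2 : q z = F (p u2).
    by have := congr1 (fun k => k u2) Fpq => /= ->; rewrite e2.
  have [y _ qy] : range eY' (q z).
    apply: contrapT => nr.
    have rem1 : (~` range eX') (p u1).
      move=> [x _ ex]; apply: nr; exists (f x) => //.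
      rewrite qz1 -ex.
      by have := congr1 (fun k => k x) FeX => /= ->.
    have rem2 : (~` range eX') (p u2).
      move=> [x _ ex]; apply: nr; exists (f x) => //.
      rewrite qz2 -ex.
      by have := congr1 (fun k => k x) FeX => /= ->.
    have pe12 : p u1 = p u2.
      by apply: hinj; rewrite ?inE //; rewrite -qz1 -qz2.
    have : (W1 `&` W2) (p u1) by split; [exact: U1W | rewrite pe12; exact: U2W].
    by rewrite W12.
  exists y => //; apply: contrapT => nz.
  have [ O1 [ P1 [oO [oP [Oy [Pz OP]]]]]] := @sep2 _ hY _ _ nz.
  have oO' : open (eY @^-1` O1) by exact: (proj1 (continuousP eY) (proj1 embY)).
  have [V [oV eV]] := proj2 (proj2 embY') _ oO'.
  have oQ : open (P1 `&` q @^-1` V).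
    by apply: openI => //; exact: (proj1 (continuousP q) qc).
  have Qz : (P1 `&` q @^-1` V) z.
    split => //=.
    have : (eY' @` (eY @^-1` O1)) (q z) by rewrite -qy; exists y.
    by rewrite eV => -[].
  have [w [[Pw Vw] [y2 _ ew]]] := dY _ (ex_intro _ z Qz) oQ.
  have : (V `&` range eY') (eY' y2).
    split; last by exists y2.
    have := congr1 (fun k => k y2) qe => /= <-.
    by rewrite ew.
  rewrite -eV => -[ w0 Ho /(proj1 (proj2 embY')) eo].
  have : (O1 `&` P1) (eY y2) by split; [rewrite -eo | rewrite ew].
  by rewrite OP.
exists (eY @^-1` (fb @` U1 `&` fb @` U2)); split.
  exact: embed_compact.
rewrite eqEsubset; split; last exact: image_preimage_subset.
move=> z Kz; have [y _ yz] := KY _ Kz.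
by exists y => //=; rewrite yz.
Qed.
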